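(* Let $G=(V,E)$ be a finite simple undirected connected graph. There exists a real constant $c>0$ such that for every nonempty proper subset $S\subset V$, \[ h^{\swarrow}(S)\;\le\;\frac{1}{|V\setminus S|}\Big(\sum_{u\in V\setminus S} d(u,S)\Big)\Big(\sum_{v\in V\setminus S} d(v)\Big)\;\le\; c\,|V\setminus S|^3 . \]
   Context: $d(v)$ is the degree of $v$, $d(u,v)$ the shortest-path distance and $d(u,S)=\min_{v\in S}d(u,v)$. A (simple) random walk moves from the current vertex $u$ to a uniformly random neighbor (probability $1/d(u)$); $H(u,S)$ is the expected number of steps for the walk started at $u$ to first reach a vertex of $S$, and $h^{\swarrow}(S)=\frac{\sum_{u\in V\setminus S}H(u,S)}{|V\setminus S|}$. *)

(* Defs.v *)
From HB Require Import structures.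
From mathcomp Require Import all_boot all_order all_algebra.
From mathcomp Require Import all_classical all_reals all_analysis.
Set Implicit Arguments. Unset Strict Implicit. Unset Printing Implicit Defensive.
Import Order.TTheory GRing.Theory Num.Theory.
Local Open Scope ring_scope.

Definition simple_graph (T : finType) (e : rel T) : Prop :=
  symmetric e /\ irreflexive e.

Definition connected_graph (T : finType) (e : rel T) : Prop :=
  forall x y : T, connect e x y.

Definition deg (T : finType) (e : rel T) (v : T) : nat := #|[set w | e v w]|.

Fixpoint walkb (T : finType) (e : rel T) (n : nat) (u v : T) : bool :=
  if n is n'.+1 then [exists y, e u y && walkb e n' y v] else u == v.

(* shortest-path distance d(u,v): least n with a walk of length n
   (for connected graphs it is < #|T|; searched in 0..#|T|-1) *)
Definition gdist (T : finType) (e : rel T) (u v : T) : nat :=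
  find (fun n => walkb e n u v) (iota 0 #|T|).

Definition gdist_set (T : finType) (e : rel T) (u : T) (S : {set T}) : nat :=
  \big[minn/#|T|]_(v in S) gdist e u v.

(* hitP R e S t x : probability that the simple random walk started at x
   first reaches S exactly at step t. *)
Fixpoint hitP (R : realType) (T : finType) (e : rel T) (S : {set T})
    (t : nat) (x : T) : R :=
  match t with
  | 0 => if x \in S then 1 else 0
  | t'.+1 => if x \in S then 0
             else \sum_(y in [set w | e x w]) (hitP R e S t' y) / (deg e x)%:R
  end.

Definition hitting_time (R : realType) (T : finType) (e : rel T)
    (u : T) (S : {set T}) : \bar R :=
  (\sum_(0 <= t <oo) ((t%:R * hitP R e S t u)%:E))%E.

Definition avg_hitting_time (R : realType) (T : finType) (e : rel T)
    (S : {set T}) : \bar R :=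
  ((\sum_(u in ~: S) hitting_time R e u S) * ((#|~: S|%:R)^-1)%:E)%E.

(* Main.v *)
Require Import Defs.
From HB Require Import structures.
From mathcomp Require Import all_boot all_order all_algebra.
From mathcomp Require Import all_classical all_reals all_analysis.
From mathcomp Require Import ring lra zify.
Set Implicit Arguments. Unset Strict Implicit. Unset Printing Implicit Defensive.
Import Order.TTheory GRing.Theory Num.Theory.

Section Dist.
Variables (T : finType) (e : rel T).
Hypothesis Hconn : forall x y : T, connect e x y.

Lemma walkb_path x p : path e x p -> walkb e (size p) x (last x p).
Proof.
elim: p x => [|y p IH] x /=; first by rewrite eqxx.
move=> /andP[exy Hp]; apply/existsP; exists y; rewrite exy /=; exact: IH.
Qed.

Lemma walk_short x v : exists2 k, k < #|T| & walkb e k x v.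
Proof.
have /connectP[p Hp ->] := Hconn x v.
case: (shortenP Hp) => p' Hp' Hu _.
exists (size p'); last exact: walkb_path.
have := max_card (mem (x :: p')); move/card_uniqP: Hu => Hu; by rewrite Hu.
Qed.

Lemma gdist_lt x v : gdist e x v < #|T|.
Proof.
have [k Hk Hw] := walk_short x v.
rewrite /gdist -[X in _ < X](size_iota 0 #|T|) -has_find.
by apply/hasP; exists k; rewrite // mem_iota.
Qed.

Lemma gdist_walk x v : walkb e (gdist e x v) x v.
Proof.
have [k Hk Hw] := walk_short x v.
have H : has (fun n => walkb e n x v) (iota 0 #|T|).
  by apply/hasP; exists k; rewrite // mem_iota.
have := nth_find 0 H; rewrite nth_iota ?add0n //.
by rewrite -[X in _ < X](size_iota 0 #|T|) -has_find.
Qed.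

Lemma gdist_le x v k : k < #|T| -> walkb e k x v -> gdist e x v <= k.
Proof.
move=> Hk Hw; rewrite leqNgt; apply/negP => Hlt.
have := before_find 0 Hlt; rewrite nth_iota // add0n => Hf.
by rewrite Hf in Hw.
Qed.

Lemma gdist0 x v : gdist e x v = 0 -> x = v.
Proof. by move=> H; have := gdist_walk x v; rewrite H /= => /eqP. Qed.

Variable S : {set T}.
Hypothesis HS : S != finset.set0.

Local Notation rho x := (gdist_set e x S).

Lemma bigmin_le (I : finType) (P : pred I) (F : I -> nat) d i :
  P i -> \big[minn/d]_(j | P j) F j <= F i.
Proof.
move=> Pi; rewrite -big_filter.
have : i \in [seq j <- index_enum I | P j] by rewrite mem_filter Pi mem_index_enum.
elim: [seq j <- index_enum I | P j] => [//|j r IH]; rewrite big_cons inE.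
case/orP => [/eqP<-|/IH H]; first exact: geq_minl.
exact: leq_trans (geq_minr _ _) H.
Qed.

Lemma rho_le x v : v \in S -> rho x <= gdist e x v.
Proof. by move=> Hv; apply: bigmin_le. Qed.

Lemma rho_attained x : exists2 v, v \in S & rho x = gdist e x v.
Proof.
have [v0 Hv0] : exists v0, v0 \in S by apply/finset.set0Pn.
have : (rho x = #|T|) \/ exists2 v, v \in S & rho x = gdist e x v.
  rewrite /gdist_set; apply: (big_ind (fun m => m = #|T| \/ exists2 v, v \in S & m = gdist e x v)).
  - by left.
  - move=> a b Ha Hb; rewrite /minn; case: ifP => _; [exact: Ha | exact: Hb].
  - by move=> v Hv; right; exists v.
case=> // H; have := rho_le x Hv0; rewrite H leqNgt gdist_lt //.
Qed.

Lemma rho_lt x : rho x < #|T|.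
Proof. have [v _ ->] := rho_attained x; exact: gdist_lt. Qed.

Lemma rho0 x : rho x = 0 -> x \in S.
Proof. by have [v Hv ->] := rho_attained x; move/gdist0 ->. Qed.

Lemma rho_desc x : 0 < rho x -> exists2 y, e x y & rho y < rho x.
Proof.
have [v Hv Hr] := rho_attained x; rewrite Hr.
have := gdist_walk x v; have := gdist_lt x v.
case: (gdist e x v) => // k Hk /= /existsP[y /andP[exy Hw]] _.
exists y => //; apply: leq_ltn_trans (rho_le y Hv) _.
apply: gdist_le Hw; exact: ltnW.
Qed.

Lemma rho_lip x y : e x y -> rho x <= (rho y).+1.
Proof.
move=> exy; have [v Hv Hr] := rho_attained y; rewrite Hr.
apply: leq_trans (rho_le x Hv) _.
have Hw : walkb e (gdist e y v).+1 x v.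
  by apply/existsP; exists y; rewrite exy /=; apply: gdist_walk.
case: (ltnP (gdist e y v).+1 #|T|) => H; first exact: gdist_le.
by apply: leq_trans H; apply: ltnW; apply: gdist_lt.
Qed.

End Dist.

Local Open Scope ring_scope.


Section Lap.
Variables (R : realFieldType) (T : finType) (e : rel T).
Hypothesis Hsym : symmetric e.

Definition Lap (f : T -> R) x := (deg e x)%:R * f x - \sum_y (e x y)%:R * f y.
Definition Energy (f : T -> R) := \sum_x \sum_y (e x y)%:R * (f x - f y) ^+ 2.

Lemma deg_sum x : (deg e x)%:R = \sum_y (e x y)%:R :> R.
Proof.
rewrite /deg -sum1dep_card natr_sum [RHS](bigID (e x)) /=.
rewrite [X in _ + X]big1 ?addr0; last by move=> y /negbTE ->.
by apply: eq_bigr => y ->.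
Qed.

Lemma lap_expand (f k : T -> R) :
  \sum_x f x * Lap k x =
  \sum_x \sum_y (e x y)%:R * (f x * k x) - \sum_x \sum_y (e x y)%:R * (f x * k y).
Proof.
rewrite -sumrB; apply: eq_bigr => x _.
rewrite /Lap mulrBr deg_sum mulr_suml mulr_sumr; congr (_ - _).
  by apply: eq_bigr => y _; ring.
by rewrite mulr_sumr; apply: eq_bigr => y _; ring.
Qed.

Lemma swap_sum (F : T -> T -> R) :
  \sum_x \sum_y (e x y)%:R * F x y = \sum_x \sum_y (e x y)%:R * F y x.
Proof.
rewrite exchange_big /=; apply: eq_bigr => x _; apply: eq_bigr => y _.
by rewrite Hsym.
Qed.

Lemma green (f k : T -> R) : \sum_x f x * Lap k x = \sum_x k x * Lap f x.
Proof.
rewrite !lap_expand; congr (_ - _); last first.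
  rewrite swap_sum; apply: eq_bigr => x _; apply: eq_bigr => y _; ring.
apply: eq_bigr => x _; apply: eq_bigr => y _; ring.
Qed.

Lemma energy_eq (f : T -> R) : \sum_x f x * Lap f x = Energy f / 2.
Proof.
rewrite lap_expand /Energy.
have E : \sum_x \sum_y (e x y)%:R * (f x - f y) ^+ 2 =
   \sum_x \sum_y (e x y)%:R * (f x * f x) + \sum_x \sum_y (e x y)%:R * (f y * f y)
   - 2 * \sum_x \sum_y (e x y)%:R * (f x * f y).
  rewrite mulr_sumr -!big_split -sumrB /=; apply: eq_bigr => x _.
  rewrite mulr_sumr -!big_split -sumrB /=; apply: eq_bigr => y _; ring.
rewrite E -(swap_sum (fun x y => f x * f x)); by field.
Qed.

End Lap.

Local Open Scope ring_scope.


Lemma cs_sum (R : realFieldType) (a : nat -> R) n :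
  (\sum_(0 <= i < n) a i) ^+ 2 <= n%:R * \sum_(0 <= i < n) a i ^+ 2.
Proof.
elim: n => [|n IH]; first by rewrite !big_nil mul0r expr2 mulr0.
rewrite !big_nat_recr //=.
case: n IH => [|n] IH.
  by rewrite !big_nil !add0r mul1r.
set s := \sum_(0 <= i < n.+1) a i in IH *; set Q := \sum_(0 <= i < n.+1) a i ^+ 2 in IH *.
have Q0 : 0 <= Q by apply: sumr_ge0 => i _; apply: sqr_ge0.
rewrite -natr1.
have key : 2 * s * a n.+1 <= Q + n.+1%:R * a n.+1 ^+ 2.
  have np' : 0 < n.+1%:R :> R by rewrite ltr0n.
  have H1 : 0 <= (s - n.+1%:R * a n.+1) ^+ 2 by apply: sqr_ge0.
  have H2 : n.+1%:R * (2 * s * a n.+1) <= n.+1%:R * (Q + n.+1%:R * a n.+1 ^+ 2) by nra.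
  by rewrite ler_pM2l in H2.
nra.
Qed.

Lemma sum_inj_le (R : realFieldType) (I T : finType) (F : T -> R) (f : I -> T) :
  injective f -> (forall x, 0 <= F x) -> \sum_i F (f i) <= \sum_x F x.
Proof.
move=> inj F0.
rewrite -(big_imset _ (in2W inj)) /= [X in _ <= X](bigID (mem [set f x | x in xpredT])) /=.
by rewrite ler_wpDr // sumr_ge0.
Qed.

Section PathB.
Variables (R : realFieldType) (T : finType) (e : rel T).
Hypothesis Hsym : symmetric e.
Hypothesis Hconn : forall x y : T, connect e x y.
Variable S : {set T}.
Hypothesis HS : S != finset.set0.

Local Notation rho x := (gdist_set e x S).

Definition nxt x := odflt x [pick y | e x y && (rho y < rho x)%N].

Lemma nxt_spec x : (0 < rho x)%N -> e x (nxt x) /\ rho (nxt x) = (rho x).-1.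
Proof.
move=> H; rewrite /nxt; case: pickP => [y /andP[exy lt]|H0] /=.
  split => //; have := rho_lip Hconn HS exy; lia.
have [y exy lt] := rho_desc Hconn HS H.
by have := H0 y; rewrite exy lt.
Qed.

Variable u : T.
Local Notation L := (rho u).
Definition pth i := iter i nxt u.

Lemma rho_pth i : (i <= L)%N -> rho (pth i) = (L - i)%N.
Proof.
elim: i => [|i IH] Hi; first by rewrite subn0.
have Hr := IH (ltnW Hi).
have [_ ->] : e (pth i) (nxt (pth i)) /\ rho (nxt (pth i)) = (rho (pth i)).-1.
  by apply: nxt_spec; rewrite Hr; lia.
by rewrite Hr; lia.
Qed.

Lemma path_bound (g : T -> R) (Hg0 : forall x, x \in S -> g x = 0) :
  g u ^+ 2 <= L%:R * (Energy e g / 2).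
Proof.
have Hend : g (pth L) = 0 by apply/Hg0/(rho0 Hconn HS); rewrite rho_pth // subnn.
have Htel : g u = \sum_(0 <= i < L) (g (pth i) - g (pth i.+1)).
  have := telescope_sumr (fun i => - g (pth i)) (leq0n L).
  rewrite /= Hend oppr0 add0r opprK => <-.
  by apply: eq_bigr => i _; rewrite opprK addrC.
pose Hf x := \sum_y (e x y)%:R * (rho y < rho x)%:R * (g x - g y) ^+ 2.
have Hf0 x : 0 <= Hf x.
  by apply: sumr_ge0 => y _; apply: mulr_ge0; [apply: mulr_ge0; apply: ler0n | apply: sqr_ge0].
have step1 i : (i < L)%N -> (g (pth i) - g (pth i.+1)) ^+ 2 <= Hf (pth i).
  move=> Hi; have [exy Hr] : e (pth i) (nxt (pth i)) /\ rho (nxt (pth i)) = (rho (pth i)).-1.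
    by apply: nxt_spec; rewrite rho_pth; [lia | exact: ltnW].
  rewrite /Hf (bigD1 (nxt (pth i))) //= exy.
  have -> : (rho (nxt (pth i)) < rho (pth i))%N.
    by rewrite Hr rho_pth; [lia | exact: ltnW].
  rewrite !mul1r ler_wpDr //; first by apply: sumr_ge0 => y _; apply: mulr_ge0; [apply: mulr_ge0; apply: ler0n | apply: sqr_ge0].
have step2 : \sum_(0 <= i < L) Hf (pth i) <= \sum_x Hf x.
  rewrite big_mkord; apply: (@sum_inj_le R 'I_L T Hf (fun i : 'I_L => pth i) _ Hf0).
  move=> i j Hij; apply/val_inj => /=.
  have := congr1 (fun x => rho x) Hij; rewrite /= !rho_pth; [|exact: ltnW (ltn_ord _)..].
  have := ltn_ord i; have := ltn_ord j; lia.
have step3 : 2 * \sum_x Hf x <= Energy e g.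
  have E2 : \sum_x Hf x = \sum_x \sum_y (e x y)%:R * (rho x < rho y)%:R * (g x - g y) ^+ 2.
    rewrite /Hf; transitivity (\sum_x \sum_y (e x y)%:R * ((rho y < rho x)%:R * (g x - g y) ^+ 2)).
      by apply: eq_bigr => x _; apply: eq_bigr => y _; rewrite mulrA.
    rewrite (swap_sum Hsym (fun x y => (rho y < rho x)%:R * (g x - g y) ^+ 2)).
    apply: eq_bigr => x _; apply: eq_bigr => y _; rewrite mulrA; congr (_ * _).
    by rewrite -sqrrN opprB.
  rewrite mulr2n mulrDl mul1r {2}E2 /Hf -big_split /=; apply: ler_sum => x _.
  rewrite -big_split /=; apply: ler_sum => y _.
  rewrite -mulrDl -mulrDr; apply: ler_wpM2r; first exact: sqr_ge0.
  rewrite -natrD -natrM ler_nat; case: (e x y) => //=; lia.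
have step4 : \sum_(0 <= i < L) (g (pth i) - g (pth i.+1)) ^+ 2 <= Energy e g / 2.
  rewrite ler_pdivlMr ?ltr0n // mulrC.
  apply: le_trans step3; rewrite ler_pM2l ?ltr0n //.
  apply: le_trans step2; rewrite big_mkord [X in _ <= X]big_mkord.
  by apply: ler_sum => i _; apply: step1.
rewrite Htel; apply: le_trans (cs_sum _ _) _.
by rewrite ler_wpM2l ?ler0n.
Qed.

End PathB.

Local Open Scope ring_scope.


Section MaxP.
Variables (R : realFieldType) (T : finType) (e : rel T).
Hypothesis Hsym : symmetric e.
Hypothesis Hconn : forall x y : T, connect e x y.
Variable S : {set T}.
Hypothesis HS : S != finset.set0.

Lemma exists_max (f : T -> R) (x0 : T) : exists x, forall y, f y <= f x.
Proof.
case: (@arg_maxP _ R T x0 xpredT f isT) => i _ H; exists i => y; exact: H.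
Qed.

Lemma propag (f : T -> R) m x0 :
  (forall y, f y <= m) -> f x0 = m ->
  (forall z, f z = m -> Lap e f z = 0) -> forall y, f y = m.
Proof.
move=> Hle Hx0 Hh y.
have step z w : f z = m -> e z w -> f w = m.
  move=> Hz ezw; have := Hh z Hz; rewrite /Lap deg_sum Hz mulr_suml -sumrB.
  have Hnn : forall v, xpredT v -> 0 <= (e z v)%:R * m - (e z v)%:R * f v.
    move=> v _; rewrite -mulrBr mulr_ge0 ?ler0n // subr_ge0; exact: Hle.
  move=> /(psumr_eq0P Hnn) H.
  by have := H w isT; rewrite ezw !mul1r => /eqP; rewrite subr_eq0 => /eqP <-.
have /connectP[p Hp ->] := Hconn x0 y.
elim: p x0 Hx0 Hp => [|w p IH] x0 Hx0 //= /andP[ew Hp].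
exact: IH (step _ _ Hx0 ew) Hp.
Qed.

Lemma max_principle (f : T -> R) (A : pred T) c : 0 <= c ->
  (forall x, x \in S -> f x = 0) -> (forall z, A z -> f z <= c) ->
  (forall z, z \notin S -> ~~ A z -> Lap e f z = 0) -> forall y, f y <= c.
Proof.
move=> c0 HS0 HA Hh.
have [s Hs] : exists s, s \in S by apply/finset.set0Pn.
have [x0 Hx0] := exists_max f s.
case: (lerP (f x0) c) => [H y|H]; first exact: le_trans (Hx0 y) H.
suff E : forall z, f z = f x0 -> Lap e f z = 0.
  have := propag Hx0 erefl E s; rewrite (HS0 s Hs) => E'; move: H; rewrite -E'; lra.
move=> z Hz; apply: Hh.
  by apply/negP => /HS0 Hz0; move: H; rewrite -Hz Hz0; lra.
by apply/negP => /HA; rewrite Hz; lra.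
Qed.

Lemma lapN (f : T -> R) z : Lap e (fun x => - f x) z = - Lap e f z.
Proof.
rewrite /Lap opprB mulrN -sumrN addrC; congr (_ + _).
by apply: eq_bigr => y _; rewrite mulrN opprK.
Qed.

Lemma kernel0 (f : T -> R) :
  (forall x, x \in S -> f x = 0) -> (forall z, z \notin S -> Lap e f z = 0) ->
  forall y, f y = 0.
Proof.
move=> H0 Hh y; apply/eqP; rewrite eq_le; apply/andP; split.
  by apply: (max_principle (A := pred0)) => // z Hz _; apply: Hh.
rewrite -oppr_le0; apply: (max_principle (f := fun x => - f x) (A := pred0)) => //.
  by move=> x /H0 ->; rewrite oppr0.
by move=> z Hz _; rewrite lapN Hh // oppr0.
Qed.

End MaxP.

Local Open Scope ring_scope.


Section Solve.
Variables (R : realFieldType) (T : finType) (e : rel T).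
Hypothesis Hsym : symmetric e.
Hypothesis Hconn : forall x y : T, connect e x y.
Variable S : {set T}.
Hypothesis HS : S != finset.set0.

Lemma sum_delta (f : T -> R) x : \sum_y f y * (x == y)%:R = f x.
Proof.
rewrite (eq_bigr (fun y => if y == x then f y else 0)); last first.
  by move=> y _; rewrite eq_sym; case: eqP; rewrite ?mulr1 ?mulr0.
by rewrite -big_mkcond big_pred1_eq.
Qed.

Lemma solvable (b : T -> R) : exists f : T -> R,
  (forall x, x \in S -> f x = b x) /\ (forall x, x \notin S -> Lap e f x = b x).
Proof.
pose coef x y : R := if x \in S then (x == y)%:R else (deg e x)%:R * (x == y)%:R - (e x y)%:R.
have Hcoef (f : T -> R) x : \sum_y f y * coef x y = if x \in S then f x else Lap e f x.
  rewrite /coef; case: ifP => _.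
    exact: sum_delta.
  rewrite /Lap; under eq_bigr do rewrite mulrBr.
  rewrite sumrB; congr (_ - _); last by apply: eq_bigr => y _; rewrite mulrC.
  rewrite -sum_delta mulr_sumr; apply: eq_bigr => y _; ring.
pose A : 'M[R]_#|T| := \matrix_(i, j) coef (enum_val j) (enum_val i).
have Hmul (v : 'rV[R]_#|T|) x :
    (v *m A) 0 (enum_rank x) = \sum_y v 0 (enum_rank y) * coef x y.
  rewrite mxE (big_enum_val (A := T)) /=; apply: eq_bigr => j _.
  by rewrite mxE enum_rankK enum_valK.
have unitA : A \in unitmx.
  rewrite unitmxE unitfE; apply/negP => /det0P [v vn0 vA0].
  pose f y := v 0 (enum_rank y).
  have Hf : forall y, f y = 0.
    apply: (kernel0 Hconn HS).
      by move=> x Hx; have := Hmul v x; rewrite vA0 mxE Hcoef Hx /f => <-.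
    by move=> x Hx; have := Hmul v x; rewrite vA0 mxE Hcoef (negbTE Hx) /f => <-.
  move/negP: vn0; apply; apply/eqP/rowP => j; rewrite !mxE.
  have := Hf (enum_val j); rewrite /f enum_valK => ->.
  done.
pose brow : 'rV[R]_#|T| := \row_i b (enum_val i).
pose v := brow *m invmx A.
have vA : v *m A = brow by rewrite /v mulmxKV.
exists (fun y => v 0 (enum_rank y)); split.
  move=> x Hx; have := Hmul v x; rewrite vA Hcoef Hx mxE enum_rankK => ->; done.
move=> x Hx; have := Hmul v x; rewrite vA Hcoef (negbTE Hx) mxE enum_rankK => ->; done.
Qed.

End Solve.

Local Open Scope ring_scope.


Section HB.
Variables (R : realFieldType) (T : finType) (e : rel T).
Hypothesis Hsym : symmetric e.
Hypothesis Hconn : forall x y : T, connect e x y.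
Variable S : {set T}.
Hypothesis HS : S != finset.set0.

Lemma sum_notS (F : T -> R) :
  \sum_x (if x \in S then 0 else F x) = \sum_(x in ~: S) F x.
Proof.
rewrite [RHS]big_mkcond; apply: eq_bigr => x _; rewrite finset.in_setC.
by case: (x \in S).
Qed.

Lemma h_bound (h : T -> R) :
  (forall x, x \in S -> h x = 0) -> (forall x, x \notin S -> Lap e h x = (deg e x)%:R) ->
  forall u, u \notin S ->
  h u <= (gdist_set e u S)%:R * \sum_(v in ~: S) (deg e v)%:R.
Proof.
move=> Hh0 Hh u Hu.
have [g [Hg0 Hg]] := @solvable R _ _ Hconn _ HS (fun x => if x \in S then 0 else (x == u)%:R).
have Hg0' : forall x, x \in S -> g x = 0 by move=> x Hx; rewrite Hg0 Hx.
have Hg' : forall x, x \notin S -> Lap e g x = (x == u)%:R by move=> x Hx; rewrite Hg // (negbTE Hx).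
have Hdot (k : T -> R) : (forall x, x \in S -> k x = 0) -> \sum_x k x * Lap e g x = k u.
  move=> Hk0; rewrite -[RHS](sum_delta k u); apply: eq_bigr => x _.
  case: (boolP (x \in S)) => Hx; first by rewrite Hk0 // !mul0r.
  by rewrite Hg' // eq_sym.
have Hhu : h u = \sum_(x in ~: S) g x * (deg e x)%:R.
  rewrite -(Hdot h Hh0) -green // -sum_notS; apply: eq_bigr => x _.
  case: ifP => Hx; first by rewrite Hg0' ?mul0r.
  by rewrite Hh // Hx.
have Egu : g u = Energy e g / 2 by rewrite -(Hdot g Hg0') energy_eq.
have Epos : 0 <= Energy e g.
  apply: sumr_ge0 => x _; apply: sumr_ge0 => y _; apply: mulr_ge0; [exact: ler0n | exact: sqr_ge0].
have gu0 : 0 <= g u by rewrite Egu; apply: divr_ge0 => //; apply: ler0n.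
have gmax : forall w, g w <= g u.
  apply: (max_principle Hconn HS (A := pred1 u)) => //.
    by move=> z /eqP ->.
  by move=> z Hz Hzu; rewrite Hg' //; move: Hzu; rewrite /= => /negbTE ->.
have gle : g u <= (gdist_set e u S)%:R.
  have := path_bound Hsym Hconn HS u Hg0'; rewrite -Egu => H.
  have r0 : 0 <= (gdist_set e u S)%:R :> R by apply: ler0n.
  case: (ltrP 0 (g u)) => gp; last by apply: le_trans gp r0.
  nra.
have D0 : 0 <= \sum_(v in ~: S) (deg e v)%:R :> R by apply: sumr_ge0 => v _; apply: ler0n.
rewrite Hhu; apply: le_trans (_ : _ <= g u * \sum_(v in ~: S) (deg e v)%:R) _.
  rewrite mulr_sumr; apply: ler_sum => x _; apply: ler_wpM2r; [exact: ler0n | exact: gmax].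
by apply: ler_wpM2r.
Qed.

End HB.

Local Open Scope ring_scope.


Lemma series_le (R : realType) (a : nat -> R) (l : R) :
  (forall t, 0 <= a t) -> (forall N, \sum_(0 <= t < N) a t <= l) ->
  (\sum_(0 <= t <oo) (a t)%:E <= l%:E)%E.
Proof.
move=> a0 Hl.
have u0 : forall n, (0 <= n)%N -> xpredT n -> (0 <= (a n)%:E)%E by move=> n _ _; rewrite lee_fin.
apply: (lime_le (is_cvg_nneseries u0)); apply: nearW => k.
by rewrite sumEFin lee_fin.
Qed.

Section Walk.
Variables (R : realType) (T : finType) (e : rel T).
Hypothesis Hsym : symmetric e.
Hypothesis Hconn : forall x y : T, connect e x y.
Variable S : {set T}.
Hypothesis HS : S != finset.set0.

Local Notation P := (hitP R e S).

Lemma hitPS t x : P t.+1 x =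
  if x \in S then 0 else \sum_(y in [set w | e x w]) P t y / (deg e x)%:R.
Proof. by []. Qed.

Lemma hitP0 x : P 0 x = if x \in S then 1 else 0.
Proof. by []. Qed.

Lemma deg_pos x : x \notin S -> (0 < deg e x)%N.
Proof.
move=> Hx; have [s Hs] : exists s, s \in S by apply/finset.set0Pn.
have /connectP [p Hp Hlast] := Hconn x s.
case: p Hp Hlast => [|y p] /=.
  by move=> _ Hxs; move: Hx; rewrite -Hxs Hs.
move=> /andP[exy _] _; rewrite /deg; apply/card_gt0P; exists y; by rewrite inE.
Qed.

Lemma sumA (F : T -> R) x :
  \sum_(y in [set w | e x w]) F y = \sum_y (e x y)%:R * F y.
Proof.
rewrite big_mkcond; apply: eq_bigr => y _; rewrite inE.
by case: (e x y); rewrite ?mul1r ?mul0r.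
Qed.

Lemma hitP_ge0 t x : 0 <= P t x.
Proof.
elim: t x => [|t IH] x; first by rewrite hitP0; case: ifP.
rewrite hitPS; case: ifP => // _; apply: sumr_ge0 => y _.
by apply: divr_ge0 => //; apply: ler0n.
Qed.

Lemma cum_le1 N x : \sum_(0 <= t < N) P t x <= 1.
Proof.
elim: N x => [|N IH] x; first by rewrite big_nil.
rewrite big_nat_recl // hitP0.
under eq_bigr do rewrite hitPS.
case: ifP => Hx.
  by rewrite big1 ?addr0.
rewrite add0r; under eq_bigr do rewrite -mulr_suml.
rewrite -mulr_suml exchange_big /=.
have d0 : (0 < (deg e x)%:R :> R) by rewrite ltr0n deg_pos // Hx.
rewrite ler_pdivrMr // mul1r.
apply: le_trans (_ : _ <= \sum_(y in [set w | e x w]) (1 : R)) _.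
  by apply: ler_sum => y _; apply: IH.
by rewrite sumr_const /deg.
Qed.

Variable h : T -> R.
Hypothesis Hh0 : forall x, x \in S -> h x = 0.
Hypothesis Hh : forall x, x \notin S -> Lap e h x = (deg e x)%:R.

Lemma h_ge0 x : 0 <= h x.
Proof.
have [x0 Hx0] := exists_max (fun y => - h y) x.
apply: le_trans (_ : h x0 <= h x); last by have := Hx0 x; rewrite lerN2.
rewrite leNgt; apply/negP => Hneg.
have Hx0S : x0 \notin S by apply/negP => /Hh0 E; move: Hneg; rewrite E ltxx.
have := Hh Hx0S; rewrite /Lap deg_sum mulr_suml -sumrB => E.
have : \sum_i ((e x0 i)%:R * h x0 - (e x0 i)%:R * h i) <= 0.
  apply: sumr_le0 => y _; rewrite -mulrBr; apply: mulr_ge0_le0; first exact: ler0n.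
  by rewrite subr_le0; have := Hx0 y; rewrite lerN2.
rewrite E -deg_sum => H; have := deg_pos Hx0S; rewrite -(ltr0n R) => H'.
by move: H H'; lra.
Qed.

Lemma acc_le N x : \sum_(0 <= t < N) t%:R * P t x <= h x.
Proof.
elim: N x => [|N IH] x; first by rewrite big_nil h_ge0.
rewrite big_nat_recl // mul0r add0r.
case: (boolP (x \in S)) => Hx.
  rewrite big1 ?h_ge0 // => t _; by rewrite hitPS Hx mulr0.
have Hx' := Hx.
under eq_bigr do rewrite hitPS (negbTE Hx).
have d0 : (0 < (deg e x)%:R :> R) by rewrite ltr0n deg_pos.
have E : \sum_(0 <= i < N) i.+1%:R * (\sum_(y in [set w | e x w]) P i y / (deg e x)%:R) =
   (\sum_(y in [set w | e x w]) \sum_(0 <= i < N) i.+1%:R * P i y) / (deg e x)%:R.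
  rewrite mulr_suml; under [RHS]eq_bigr do rewrite mulr_suml.
  rewrite [RHS]exchange_big /=; apply: eq_bigr => i _; rewrite mulr_sumr.
  by apply: eq_bigr => y _; rewrite mulrA.
rewrite E ler_pdivrMr //.
have Ehx : h x * (deg e x)%:R = \sum_(y in [set w | e x w]) h y + (deg e x)%:R.
  have L := Hh Hx'; rewrite /Lap -sumA in L; rewrite mulrC; lra.
rewrite Ehx.
apply: le_trans (_ : _ <= \sum_(y in [set w | e x w]) (h y + 1)) _; last first.
  by rewrite big_split /= sumr_const /deg.
apply: ler_sum => y _.
have -> : \sum_(0 <= i < N) i.+1%:R * P i y =
   \sum_(0 <= i < N) i%:R * P i y + \sum_(0 <= i < N) P i y.
  rewrite -big_split /=; apply: eq_bigr => i _; rewrite -natr1; ring.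
by apply: lerD; [apply: IH | apply: cum_le1].
Qed.

Lemma hit_le u : (hitting_time R e u S <= (h u)%:E)%E.
Proof.
apply: series_le => [t|N]; last exact: acc_le.
by apply: mulr_ge0; [apply: ler0n | apply: hitP_ge0].
Qed.

End Walk.

Local Open Scope ring_scope.
Theorem proposition2 (R : realType) (T : finType) (e : rel T)
  (Hsimple : simple_graph e) (Hconn : connected_graph e) :
  exists c : R, 0 < c /\
    forall S : {set T}, S != finset.set0 -> S != finset.setT ->
      let B := (#|~: S|%:R)^-1 *
               (\sum_(u in ~: S) (gdist_set e u S)%:R) *
               (\sum_(v in ~: S) (deg e v)%:R) in
      (avg_hitting_time R e S <= B%:E)%E /\ B <= c * (#|~: S|%:R) ^+ 3.
Proof.
have [Hsym _] := Hsimple.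
exists ((#|T|%:R) ^+ 2 + 1); split.
  by apply: ltr_wpDl; [apply: sqr_ge0 | apply: ltr01].
move=> S HS HT B.
have [x1 Hx1] : exists x, x \notin S.
  apply/existsP; apply: contraR HT => /existsPn H.
  by apply/eqP/setP => x; rewrite inE; move: (H x); rewrite negbK.
have n1 : (0 < #|~: S|)%N by apply/card_gt0P; exists x1; rewrite inE.
have [h [Hh0 Hh]] := @solvable R _ _ Hconn _ HS (fun x => if x \in S then 0 else (deg e x)%:R).
have Hh0' : forall x, x \in S -> h x = 0 by move=> x Hx; rewrite Hh0 Hx.
have Hh' : forall x, x \notin S -> Lap e h x = (deg e x)%:R by move=> x Hx; rewrite Hh // (negbTE Hx).
pose D : R := \sum_(v in ~: S) (deg e v)%:R.
pose Sr : R := \sum_(u in ~: S) (gdist_set e u S)%:R.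
split.
  rewrite /avg_hitting_time.
  have -> : B = (Sr * D) * (#|~: S|%:R)^-1 by rewrite /B /Sr /D; ring.
  rewrite EFinM; apply: lee_wpmul2r; first by rewrite lee_fin invr_ge0 ler0n.
  apply: (@le_trans _ _ (\sum_(u in ~: S) (h u)%:E)%E).
    by apply: lee_sum => u _; apply: hit_le.
  rewrite sumEFin lee_fin mulr_suml; apply: ler_sum => u; rewrite inE => Hu.
  exact: h_bound.
have N0 : 0 <= #|T|%:R :> R by apply: ler0n.
have m1 : 1 <= #|~: S|%:R :> R by rewrite ler1n.
have Sr0 : 0 <= Sr by apply: sumr_ge0 => u _; apply: ler0n.
have D0 : 0 <= D by apply: sumr_ge0 => u _; apply: ler0n.
have SrN : Sr <= #|~: S|%:R * #|T|%:R.
  apply: le_trans (_ : Sr <= \sum_(u in ~: S) (#|T|%:R : R)) _.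
    apply: ler_sum => u _; rewrite ler_nat; apply: ltnW; exact: rho_lt.
  by rewrite sumr_const mulr_natl.
have DN : D <= #|~: S|%:R * #|T|%:R.
  apply: le_trans (_ : D <= \sum_(u in ~: S) (#|T|%:R : R)) _.
    apply: ler_sum => u _; rewrite ler_nat; exact: max_card.
  by rewrite sumr_const mulr_natl.
set m := #|~: S|%:R : R in m1 SrN DN *.
set N := #|T|%:R : R in N0 SrN DN *.
have m0 : 0 < m by lra.
have H1 : m^-1 * Sr <= N.
  by rewrite ler_pdivrMl // mulrC.
have H2 : B <= N * (m * N).
  rewrite /B; apply: ler_pM => //; first by apply: mulr_ge0 => //; rewrite invr_ge0; lra.
have H3 : m <= m ^+ 3.
  by rewrite !exprS expr0 mulr1; nra.
nra.
Qed.
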